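(* Let $D$ be a dataset over categorical attributes $A_1,\dots,A_m$ and a metric attribute $M$, let $V$ be a record, let $f_M$ be a deterministic outlier verification function, and let $\epsilon_1>0$. Let $u$ be a utility function on contexts of sensitivity $\Delta u\le 1$: either $u_V(D,C)=|D_C|$ (context population size) or $u_V(D,C)=|D_C\cap D_{C_V}|$ for a fixed starting context $C_V$, with $u_V(D,C)=-\infty$ whenever $f_M(D_C,V)=\mathrm{false}$. Consider the Direct Approach algorithm: enumerate all $2^t$ contexts $C$, collect into $C_M$ those with $f_M(D_C,V)=\mathrm{true}$, and output $\mathrm{Exp}^{\epsilon_1}_u(D,C_M)$. Then this algorithm satisfies $(2\epsilon_1,\ COE_M(\cdot,V))$-Output Constrained Differential Privacy.
   Context: Attribute $A_i$ has a finite domain of size $|A_i|$ (all possible values, whether or not they occur in $D$); $t=\sum_{i=1}^m|A_i|$. A context is a binary vector $C=\langle c_{11},\dots,c_{1|A_1|},\dots,c_{m1},\dots,c_{m|A_m|}\rangle$ of length $t$, where $c_{ij}=1$ means the $j$-th value of $A_i$ is selected. The population $D_C$ is the set of tuples of $D$ whose value in each $A_i$ is one of the values selected for $A_i$ in $C$. An outlier verification function $f_M(D_C,V)$ returns true iff $V$ is an outlier in $D_C$ with respect to $M$ according to a fixed deterministic outlier detection algorithm. $COE_M(D,V)$ is the set of all contexts $C$ with $V\in D_C$ and $f_M(D_C,V)=\mathrm{true}$ (matching contexts). The sensitivity of $u$ is $\Delta u=\max|u(D_1,r)-u(D_2,r)|$ over neighboring datasets $D_1,D_2$ (differing by adding/removing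 one record) and all outputs $r$. The Exponential mechanism $\mathrm{Exp}^{\epsilon}_u(D,\mathcal R)$ outputs $r\in\mathcal R$ with probability $\exp(\epsilon u(D,r)/(2\Delta u))/\sum_{r'\in\mathcal R}\exp(\epsilon u(D,r')/(2\Delta u))$. Datasets $D_1,D_2$ are $f$-neighbors if they differ by adding/removing one record and $f(D_1)=f(D_2)\neq\emptyset$. A randomized mechanism $\mathcal M$ satisfies $(\epsilon,f)$-Output Constrained Differential Privacy if for all $f$-neighbors $D_1,D_2$ and all sets $S$ of outputs, $\Pr[\mathcal M(D_1)\in S]\le e^{\epsilon}\Pr[\mathcal M(D_2)\in S]$. *)

(* Defs.v *)
From HB Require Import structures.
From mathcomp Require Import all_boot all_order all_algebra.
From mathcomp Require Import reals.
From mathcomp Require Import sequences exp.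
Set Implicit Arguments. Unset Strict Implicit. Unset Printing Implicit Defensive.
Import Order.TTheory GRing.Theory Num.Theory.
Local Open Scope ring_scope.

Section Defs.
Variable R : realType.
(* m categorical attributes A_0..A_{m-1}; attribute i has domain 'I_(sz i). *)
Variable m : nat.
Variable sz : 'I_m -> nat.

(* an attribute-value pair (i, j) : "the j-th value of A_i";
   there are t = \sum_i sz i of them *)
Definition attrval := {i : 'I_m & 'I_(sz i)}.

(* A context = binary vector of length t, i.e. the set of selected
   attribute-value pairs (c_ij = 1  <->  (i,j) \in C). *)
Definition context := {set attrval}.

(* A record: its categorical values plus its metric attribute M (in R). *)
Definition record := ({dffun forall i : 'I_m, 'I_(sz i)} * R)%type.

(* A dataset is a finite multiset of records, represented by a list. *)
Definition dataset := seq record.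

Definition neighbors (D1 D2 : dataset) : Prop :=
  exists r : record, perm_eq D2 (r :: D1) \/ perm_eq D1 (r :: D2).

Definition in_ctx (C : context) (r : record) : bool :=
  [forall i : 'I_m, (Tagged (fun i => 'I_(sz i)) (r.1 i) : attrval) \in C].

Definition pop (D : dataset) (C : context) : dataset := [seq r <- D | in_ctx C r].

Definition COE (f : dataset -> record -> bool) (D : dataset) (V : record)
  : {set context} :=
  [set C | (V \in pop D C) && f (pop D C) V].

(* finite part of the utility: |D_C| if CV = None,
   |D_C \cap D_{CV}| if CV = Some C_V.  (u = -oo on contexts where f is false;
   those contexts get probability 0, i.e. they are excluded from C_M.) *)
Definition util (CV : option context) (D : dataset) (C : context) : R :=
  match CV with
  | None => (size (pop D C))%:R
  | Some CV' => (size [seq r <- pop D C | in_ctx CV' r])%:R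
  end.

Definition CM (f : dataset -> record -> bool) (D : dataset) (V : record)
  : {set context} :=
  [set C | f (pop D C) V].

Definition direct_prob (f : dataset -> record -> bool) (V : record)
  (CV : option context) (du eps : R) (D : dataset) (C : context) : R :=
  if C \in CM f D V then
    expR (eps * util CV D C / (2 * du)) /
    \sum_(C' in CM f D V) expR (eps * util CV D C' / (2 * du))
  else 0.

Definition direct_Pr (f : dataset -> record -> bool) (V : record)
  (CV : option context) (du eps : R) (D : dataset) (S : {set context}) : R :=
  \sum_(C in S) direct_prob f V CV du eps D C.

Definition COE_neighbors (f : dataset -> record -> bool) (V : record)
  (D1 D2 : dataset) : Prop :=
  neighbors D1 D2 /\ COE f D1 V = COE f D2 V /\ COE f D1 V != set0.

End Defs.

(* Main.v *)
Require Import Defs.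
From HB Require Import structures.
From mathcomp Require Import all_boot all_order all_algebra.
From mathcomp Require Import reals.
From mathcomp Require Import sequences exp.
From mathcomp.algebra_tactics Require Import ring lra.
Import Order.TTheory GRing.Theory Num.Theory.
Local Open Scope ring_scope.

Theorem theorem2 (R : realType) (m : nat) (sz : 'I_m -> nat)
  (f : dataset R sz -> record R sz -> bool) (V : record R sz)
  (hfV : forall P : dataset R sz, f P V -> V \in P)
  (eps1 : R) (heps : 0 < eps1)
  (CV : option (context sz)) (du : R) (hdu0 : 0 < du) (hdu1 : du <= 1)
  (hsens : forall (D1 D2 : dataset R sz) (C : context sz),
      neighbors D1 D2 -> `|util CV D1 C - util CV D2 C| <= du) :
  forall (D1 D2 : dataset R sz) (S : {set context sz}),
    COE_neighbors f V D1 D2 ->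
    direct_Pr f V CV du eps1 D1 S <= expR (2 * eps1) * direct_Pr f V CV du eps1 D2 S.
Proof.
move=> D1 D2 S [hn [hcoe hne]].
have coeE : forall D, COE f D V = CM f D V.
  move=> D; apply/setP => C; rewrite !inE.
  by case Hf: (f (pop D C) V); rewrite ?andbT ?andbF // hfV.
rewrite !coeE in hcoe hne.
set k := eps1 / (2 * du).
have hk : 0 < k by rewrite /k divr_gt0 // mulr_gt0.
have hkdu : k * du = eps1 / 2 by rewrite /k; field; rewrite gt_eqF.
set a1 := fun C => expR (eps1 * util CV D1 C / (2 * du)).
set a2 := fun C => expR (eps1 * util CV D2 C / (2 * du)).
have key : forall x y, x - y <= du ->
    expR (eps1 * x / (2 * du)) <= expR (eps1 / 2) * expR (eps1 * y / (2 * du)).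
  move=> x y hxy; rewrite -expRD ler_expR.
  have -> : eps1 * x / (2 * du) = k * x by rewrite /k mulrAC.
  have -> : eps1 * y / (2 * du) = k * y by rewrite /k mulrAC.
  rewrite -hkdu -subr_ge0.
  have : k * (x - y) <= k * du by rewrite ler_pM2l.
  lra.
have hab : forall C, a1 C <= expR (eps1 / 2) * a2 C.
  move=> C; apply: key; have := hsens D1 D2 C hn.
  rewrite ler_norml => /andP[_ ->] //.
have hba : forall C, a2 C <= expR (eps1 / 2) * a1 C.
  move=> C; apply: key; have := hsens D1 D2 C hn.
  rewrite ler_norml => /andP[h _]; lra.
set Z1 := \sum_(C' in CM f D1 V) a1 C'.
set Z2 := \sum_(C' in CM f D1 V) a2 C'.
have hZ1 : 0 < Z1.
  case/set0Pn: hne => C0 HC0.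
  rewrite /Z1 (bigD1 C0) //= ltr_pwDl ?expR_gt0 //.
  by apply: sumr_ge0 => i _; rewrite ltW // expR_gt0.
have hZ21 : Z2 <= expR (eps1 / 2) * Z1.
  rewrite /Z2 /Z1 mulr_sumr; apply: ler_sum => i _; exact: hba.
have hZ2 : 0 < Z2.
  case/set0Pn: hne => C0 HC0.
  rewrite /Z2 (bigD1 C0) //= ltr_pwDl ?expR_gt0 //.
  by apply: sumr_ge0 => i _; rewrite ltW // expR_gt0.
rewrite /direct_Pr mulr_sumr; apply: ler_sum => C _.
rewrite /direct_prob -hcoe -/Z1.
case: ifP => HC; last by rewrite mulr0.
rewrite -/(a1 C) -/(a2 C) -/Z2.
rewrite ler_pdivrMr //.
have e2 : expR (2 * eps1) = expR (eps1 / 2) * expR (eps1 / 2) * expR eps1.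
  rewrite -!expRD; congr expR; lra.
apply: (le_trans (hab C)).
have ha2 : 0 <= a2 C by rewrite ltW // expR_gt0.
have he : 0 < expR (eps1 / 2) by apply: expR_gt0.
have he1 : 1 <= expR eps1 by rewrite -expR0 ler_expR ltW.
have hq : 1 <= expR (eps1 / 2) * expR eps1 * Z1 / Z2.
  rewrite ler_pdivlMr // mul1r -mulrA; apply: (le_trans hZ21).
  rewrite ler_pM2l //; rewrite -[X in X <= _]mul1r ler_pM2r //.
have -> : expR (2 * eps1) * (a2 C / Z2) * Z1 =
   expR (eps1 / 2) * a2 C * (expR (eps1 / 2) * expR eps1 * Z1 / Z2).
  rewrite e2; field; exact: lt0r_neq0.
apply: ler_peMr hq; apply: mulr_ge0 ha2; exact: ltW.
Qed.
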